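(* Let $\{B^i\}_{i=1}^N$ and $\{\tilde B^i\}_{i=1}^N$ be tuples of complex $n\times n$ matrices such that $\sum_iB^iB^{i\dagger}=\sum_i\tilde B^i\tilde B^{i\dagger}=1_n$ and such that for some $l\in\mathbb N$ each of the four sets $\{B^{i_1}\cdots B^{i_l}:\sum_k|i_k|\equiv0\}$, $\{B^{i_1}\cdots B^{i_l}:\sum_k|i_k|\equiv1\}$, $\{\tilde B^{i_1}\cdots\tilde B^{i_l}:\sum_k|i_k|\equiv0\}$, $\{\tilde B^{i_1}\cdots\tilde B^{i_l}:\sum_k|i_k|\equiv1\}$ (congruences mod 2) spans $\mathrm M_n(\mathbb C)$. Suppose that either (a) for every $L\in\mathbb N$ there is $\alpha_L\in\mathbb R$ with $\mathrm{tr}[B^{i_1}\cdots B^{i_L}]=e^{i\alpha_L}\mathrm{tr}[\tilde B^{i_1}\cdots\tilde B^{i_L}]$ for all $(i_1,\dots,i_L)$ with $\sum_k|i_k|$ even, or (b) for every $L\in\mathbb N$ there is $\alpha_L\in\mathbb R$ with the same equality for all $(i_1,\dots,i_L)$ with $\sum_k|i_k|$ odd. Then there exist $e^{i\beta}\in\mathrm U(1)$, $v\in\mathrm U(n)$ and $\eta\in\{\pm1\}$ such that $\tilde B^i=e^{i\beta}\eta^{|i|}v^\dagger B^iv$ for all $i$. Moreover $e^{i\beta}$ and $\eta$ are unique, and $v$ is unique up to a $\mathrm U(1)$ phase.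
   Context: $N,n\ge1$ are integers and $i\mapsto|i|\in\{0,1\}$ is a fixed parity function on $\{1,\dots,N\}$. (Conditions (a) and (b) are exactly the statements that the fMPSs $\{\sigma_x^{|i|}\otimes B^i\}$ and $\{\sigma_x^{|i|}\otimes\tilde B^i\}$ are gauge equivalent in anti-periodic, resp. periodic, boundary conditions.) *)

(* Defs.v *)
From HB Require Import structures.
From mathcomp Require Import all_boot all_order all_algebra.
From mathcomp Require Import spectral sesquilinear.
From mathcomp Require Import complex.
From mathcomp Require Import reals.
Set Implicit Arguments. Unset Strict Implicit. Unset Printing Implicit Defensive.
Import Order.TTheory GRing.Theory Num.Theory.
Local Open Scope ring_scope.

Definition wprod (K : nzRingType) (N n : nat) (B : 'I_N -> 'M[K]_n) (w : seq 'I_N)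
  : 'M[K]_n := foldr (fun i M => B i *m M) 1%:M w.

(* total parity sum_k |i_k| mod 2 of a word, the parity function being p *)
Definition wparity (N : nat) (p : 'I_N -> bool) (w : seq 'I_N) : bool := odd (count p w).

Definition spans_parity (K : fieldType) (N n : nat) (p : 'I_N -> bool)
  (B : 'I_N -> 'M[K]_n) (l : nat) (b : bool) : Prop :=
  (<< [seq wprod B (val w) | w in [pred w : l.-tuple 'I_N | wparity p (val w) == b]] >>%VS
     = fullv).

Local Open Scope sesquilinear_scope.

Definition gauge_rel (R : realType) (N n : nat) (p : 'I_N -> bool)
  (B Bt : 'I_N -> 'M[R[i]]_n) (c eta : R[i]) (v : 'M[R[i]]_n) : Prop :=
  [/\ `|c| = 1, (eta = 1 \/ eta = -1), v \is unitarymx &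
      forall i, Bt i = (c * eta ^+ p i) *: (v ^t* *m B i *m v)].

Definition trace_phase_eq (R : realType) (N n : nat) (p : 'I_N -> bool)
  (B Bt : 'I_N -> 'M[R[i]]_n) (b : bool) : Prop :=
  forall L : nat, exists c : R[i], `|c| = 1 /\
    forall w : seq 'I_N, size w = L -> wparity p w = b ->
      \tr (wprod B w) = c * \tr (wprod Bt w).

(* Main.v *)
Require Import Defs.
From HB Require Import structures.
From mathcomp Require Import all_boot all_order all_algebra.
From mathcomp Require Import spectral sesquilinear complex reals.
Import Order.TTheory GRing.Theory Num.Theory.
Local Open Scope ring_scope.
Local Open Scope sesquilinear_scope.
Set Implicit Arguments. Unset Strict Implicit. Unset Printing Implicit Defensive.

Section Gen.
Variable K : fieldType.

Definition islin (U W : lmodType K) (f : U -> W) :=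
  forall a x y, f (a *: x + y) = a *: f x + f y.

Lemma islin0 (U W : lmodType K) (f : U -> W) : islin f -> f 0 = 0.
Proof. move=> hf; have H := hf 1 0 0; rewrite !scale1r addr0 in H.
by apply: (addrI (f 0)); rewrite addr0 -H. Qed.

Lemma islinD (U W : lmodType K) (f : U -> W) : islin f -> forall x y, f (x + y) = f x + f y.
Proof. by move=> hf x y; have := hf 1 x y; rewrite !scale1r. Qed.

Lemma islinZ (U W : lmodType K) (f : U -> W) : islin f -> forall a x, f (a *: x) = a *: f x.
Proof. by move=> hf a x; rewrite -[a *: x]addr0 hf islin0 // addr0. Qed.

Lemma islin_sum (U W : lmodType K) (f : U -> W) m (a : 'I_m -> K) (x : 'I_m -> U) :
  islin f -> f (\sum_i a i *: x i) = \sum_i a i *: f (x i).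
Proof.
move=> hf; elim/big_rec2: _ => [|i y1 y2 _ <-]; first exact: islin0.
by rewrite hf.
Qed.

Lemma span_ext (vT : vectType K) (W : lmodType K) (s : seq vT) (f g : vT -> W) :
  islin f -> islin g -> (forall x, x \in s -> f x = g x) ->
  forall v, v \in <<s>>%VS -> f v = g v.
Proof.
move=> hf hg hs v; rewrite -[s]/(val (in_tuple s)) => /coord_span ->.
rewrite !islin_sum //; apply: eq_bigr => i _; rewrite hs //.
by rewrite mem_nth.
Qed.


Lemma span_map_sub (vT wT : vectType K) (s : seq vT) (h : vT -> wT)
  (V : {vspace wT}) : islin h -> (forall x, x \in s -> h x \in V) ->
  forall y, y \in <<s>>%VS -> h y \in V.
Proof.
move=> hh hs y; rewrite -[s]/(val (in_tuple s)) => /coord_span ->.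
rewrite islin_sum //; apply: rpred_sum => i _; apply: rpredZ.
by apply: hs; rewrite mem_nth.
Qed.

Lemma mulmx_deltaE n (A : 'M[K]_n) (a b i j : 'I_n) :
  (A *m delta_mx a b) i j = A i a * (b == j)%:R.
Proof.
rewrite !mxE (bigD1 a) //= big1 ?addr0; first by rewrite mxE eqxx /= eq_sym.
by move=> k /negbTE kna; rewrite !mxE kna mulr0.
Qed.

Lemma delta_mulmxE n (A : 'M[K]_n) (a b i j : 'I_n) :
  (delta_mx a b *m A) i j = (i == a)%:R * A b j.
Proof.
rewrite !mxE (bigD1 b) //= big1 ?addr0; first by rewrite mxE eqxx andbT.
by move=> k /negbTE knb; rewrite !mxE knb andbF mul0r.
Qed.

Lemma tr_delta n (Z : 'M[K]_n) (i j : 'I_n) : \tr (Z *m delta_mx j i) = Z i j.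
Proof.
rewrite /mxtrace (bigD1 i) //= big1 ?addr0.
  by rewrite mulmx_deltaE eqxx mulr1.
by move=> k /negbTE kni; rewrite mulmx_deltaE eq_sym kni mulr0.
Qed.

Lemma tr_nondeg n (Z : 'M[K]_n) (s : seq 'M[K]_n) :
  (forall Y, Y \in <<s>>%VS) -> (forall x, x \in s -> \tr (Z *m x) = 0) -> Z = 0.
Proof.
move=> hs hz.
have H : forall Y, (\tr (Z *m Y) : K^o) = (fun _ => 0 : K^o) Y.
  move=> Y; apply: (@span_ext _ _ s (fun Y => \tr (Z *m Y) : K^o) (fun _ => 0 : K^o)) => //.
  - move=> a x y; rewrite mulmxDr -scalemxAr mxtraceD mxtraceZ //.
  - by move=> a x y; rewrite /= scaler0 addr0.
apply/matrixP => i j; rewrite mxE -tr_delta; exact: H.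
Qed.

Lemma comm_scalar n (Z : 'M[K]_n) (i0 : 'I_n) :
  (forall X, Z *m X = X *m Z) -> Z = (Z i0 i0)%:M.
Proof.
move=> hZ; apply/matrixP => i j; rewrite mxE.
have := congr1 (fun M : 'M[K]_n => M i j) (hZ (delta_mx j j)).
rewrite mulmx_deltaE delta_mulmxE eqxx mulr1.
have [<-|nij] := eqVneq i j; last first.
  by rewrite mul0r mulr0n.
move=> _ /=; rewrite mulr1n.
have := congr1 (fun M : 'M[K]_n => M i i0) (hZ (delta_mx i i0)).
by rewrite mulmx_deltaE delta_mulmxE !eqxx mulr1 mul1r.
Qed.

Lemma islin_sumF (U W : lmodType K) (f : U -> W) m (x : 'I_m -> U) :
  islin f -> f (\sum_i x i) = \sum_i f (x i).
Proof.
move=> hf; elim/big_rec2: _ => [|i y1 y2 _ <-]; first exact: islin0.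
exact: islinD.
Qed.

Lemma mul_col_delta n (X : 'M[K]_n) (j a : 'I_n) :
  X *m delta_mx j a = \sum_k X k j *: delta_mx k a.
Proof.
apply/matrixP => r c; rewrite mulmx_deltaE summxE (bigD1 r) //= big1 ?addr0.
  by rewrite !mxE eqxx /= eq_sym.
by move=> k; rewrite eq_sym => /negbTE nk; rewrite !mxE nk mulr0.
Qed.

Lemma mul_delta_row n (X : 'M[K]_n) (j a : 'I_n) :
  delta_mx a j *m X = \sum_k X j k *: delta_mx a k.
Proof.
apply/matrixP => r c; rewrite delta_mulmxE summxE (bigD1 c) //= big1 ?addr0.
  by rewrite !mxE eqxx andbT mulrC.
by move=> k; rewrite eq_sym => /negbTE nk; rewrite !mxE nk andbF mulr0.
Qed.

Lemma delta_sandwich n (M : 'M[K]_n) (i0 a b i1 : 'I_n) :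
  delta_mx i0 a *m M *m delta_mx b i1 = M a b *: delta_mx i0 i1.
Proof.
apply/matrixP => r c; rewrite mulmx_deltaE delta_mulmxE !mxE.
by rewrite [c == i1]eq_sym; case: (r == i0); case: (i1 == c); rewrite /= ?mulr0 ?mul0r ?mulr1 ?mul1r.
Qed.

Lemma skolem_noether n (i0 : 'I_n) (th : 'M[K]_n -> 'M[K]_n) :
  islin th -> (forall X Y, th (X *m Y) = th X *m th Y) -> th 1%:M != 0 ->
  exists S, S \in unitmx /\ forall X, th X *m S = S *m X.
Proof.
move=> hl hm h1.
pose E := @delta_mx K n n.
have hE0 : th (E i0 i0) != 0.
  apply: contra h1 => /eqP h0; apply/eqP.
  rewrite mx1_sum_delta islin_sumF // big1 // => j _.
  by rewrite -(mul_delta_mx i0) -(mul_delta_mx i0 j) !hm h0 mulmx0 mul0mx.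
have [[a b] /= hab] : exists ab : 'I_n * 'I_n, th (E i0 i0) ab.1 ab.2 != 0.
  case: (pickP (fun ab : 'I_n * 'I_n => th (E i0 i0) ab.1 ab.2 != 0)).
    by move=> ab hab; exists ab.
  move=> h; case/negP: hE0; apply/eqP/matrixP => r c.
  by have := h (r, c); rewrite /= mxE => /negbFE/eqP.
pose S := \sum_j th (E j i0) *m E b i0 *m E i0 j.
pose T := \sum_j E j i0 *m E i0 a *m th (E i0 j).
pose w := th (E i0 i0) a b.
have TS : T *m S = w%:M.
  rewrite /T mulmx_suml (eq_bigr (fun j => w *: E j j)); last first.
    move=> j _; rewrite mulmx_sumr (bigD1 j) //= big1 ?addr0; last first.
      move=> k nkj; rewrite !mulmxA -[_ *m th (E i0 j) *m _]mulmxA -hm.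
      rewrite (@mul_delta_mx_0 _ _ _ _ j k i0 i0); last by rewrite eq_sym.
      by rewrite (islin0 hl) mulmx0 !mul0mx.
    rewrite !mulmxA -[_ *m th (E i0 j) *m _]mulmxA -hm mul_delta_mx.
    rewrite mul_delta_mx delta_sandwich -scalemxAl mul_delta_mx.
    by [].
  by rewrite -scaler_sumr -mx1_sum_delta scalemx1.
have wn0 : w != 0 by [].
exists S; split.
  have : (w^-1 *: T) *m S = 1%:M.
    by rewrite -scalemxAl TS scale_scalar_mx mulVf.
  by case/mulmx1_unit.
move=> X; rewrite /S mulmx_sumr mulmx_suml.
rewrite (eq_bigr (fun j => \sum_k X k j *: (th (E k i0) *m E b i0 *m E i0 j))); last first.
  move=> j _; rewrite !mulmxA -hm (mul_col_delta X) islin_sumF //.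
  rewrite !mulmx_suml; apply: eq_bigr => k _.
  by rewrite islinZ // -!scalemxAl.
rewrite exchange_big /=; apply: eq_bigr => k _.
rewrite -!mulmxA (mul_delta_row X) !mulmx_sumr; apply: eq_bigr => j _.
by rewrite -!scalemxAr !mulmxA.
Qed.

End Gen.

Section Words.
Variables (K : fieldType) (N n : nat) (p : 'I_N -> bool).
Implicit Types (B Bt : 'I_N -> 'M[K]_n).

Definition wseq B L b := [seq wprod B (val w) | w in [pred w : L.-tuple 'I_N | wparity p (val w) == b]].

Definition SP B L b := forall X : 'M[K]_n, X \in <<wseq B L b>>%VS.

Lemma SP_of B L b : spans_parity p B L b -> SP B L b.
Proof. by move=> h X; rewrite /wseq h memvf. Qed.

Lemma wprod_cat B (w1 w2 : seq 'I_N) : wprod B (w1 ++ w2) = wprod B w1 *m wprod B w2.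
Proof. by elim: w1 => [|i w IH] /=; rewrite ?mul1mx // IH mulmxA. Qed.

Lemma wparity_cons (i : 'I_N) w : wparity p (i :: w) = p i (+) wparity p w.
Proof. by rewrite /wparity /= oddD oddb. Qed.

Lemma wparity_cat w1 w2 : wparity p (w1 ++ w2) = wparity p w1 (+) wparity p w2.
Proof. by rewrite /wparity count_cat oddD. Qed.

Lemma wseq_mem B L b (t : L.-tuple 'I_N) : wparity p t = b -> wprod B t \in wseq B L b.
Proof. by move=> h; apply: (image_f (fun w : L.-tuple 'I_N => wprod B (val w))); apply/eqP. Qed.

Lemma wseq_inv B L b x : x \in wseq B L b ->
  exists t : L.-tuple 'I_N, wparity p t = b /\ x = wprod B t.
Proof. by case/imageP => t; rewrite inE => /eqP ht ->; exists t. Qed.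

Lemma wseq_nth B Bt L b k : (k < size (wseq B L b))%N ->
  exists t : L.-tuple 'I_N, [/\ wparity p t = b, (wseq B L b)`_k = wprod B t
                                & (wseq Bt L b)`_k = wprod Bt t].
Proof.
rewrite /wseq size_image => hk.
exists (enum_val (Ordinal hk)); split.
- by have := enum_valP (Ordinal hk) => /eqP.
- by rewrite (nth_image _ _ (Ordinal hk)).
- by rewrite (nth_image _ _ (Ordinal hk)).
Qed.

Lemma SP_succ B Bd L b : SP B L false -> SP B L true ->
  \sum_i B i *m Bd i = 1%:M -> SP B L.+1 b.
Proof.
move=> h0 h1 hn X; rewrite -[X]mul1mx -hn mulmx_suml; apply: rpred_sum => i _.
rewrite -mulmxA.
have hY : forall Y, Y \in <<wseq B L (p i (+) b)>>%VS -> B i *m Y \in <<wseq B L.+1 b>>%VS.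
  apply: span_map_sub.
    by move=> a x y; rewrite mulmxDr scalemxAr.
  move=> x /wseq_inv [t [ht ->]]; apply: memv_span.
  rewrite -[B i *m _]/(wprod B (val (cons_tuple i t))); apply: wseq_mem.
  by rewrite /= wparity_cons ht addKb.
by apply: hY; case: (p i (+) b); [apply: h1 | apply: h0].
Qed.

Definition Phi B Bt L b (X : 'M[K]_n) : 'M[K]_n :=
  \sum_(k < size (wseq B L b)) coord (in_tuple (wseq B L b)) k X *: (wseq Bt L b)`_k.

Lemma Phi_lin B Bt L b : islin (Phi B Bt L b).
Proof.
move=> a x y; rewrite /Phi scaler_sumr -big_split /=; apply: eq_bigr => k _.
by rewrite linearP /= scalerDl scalerA.
Qed.

Definition TR B Bt L b := forall a : 'I_(size (wseq B L b)) -> K,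
  \sum_k a k *: (wseq B L b)`_k = 0 -> \sum_k a k *: (wseq Bt L b)`_k = 0.

Lemma Phi_word B Bt L b : SP B L b -> TR B Bt L b ->
  forall t : L.-tuple 'I_N, wparity p t = b -> Phi B Bt L b (wprod B t) = wprod Bt t.
Proof.
move=> hS hT t ht.
have htA : t \in [pred w : L.-tuple 'I_N | wparity p (val w) == b] by apply/eqP.
pose j := enum_rank_in htA t.
have hj : (j < size (wseq B L b))%N by rewrite /wseq size_image.
have eB : (wseq B L b)`_j = wprod B t.
  by rewrite /wseq (nth_image _ _ j) enum_rankK_in.
have eBt : (wseq Bt L b)`_j = wprod Bt t.
  by rewrite /wseq (nth_image _ _ j) enum_rankK_in.
pose j' : 'I_(size (wseq B L b)) := Ordinal hj.
have hsum : forall (s : seq 'M[K]_n),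
    \sum_(k < size (wseq B L b)) (k == j')%:R *: s`_k = s`_j.
  move=> s; rewrite (bigD1 j') //= big1 ?addr0 ?eqxx ?scale1r //.
  by move=> k /negbTE ->; rewrite scale0r.
have := hT (fun k => coord (in_tuple (wseq B L b)) k (wprod B t) - (k == j')%:R).
under eq_bigr do rewrite scalerBl.
rewrite sumrB hsum eB -(coord_span (X := in_tuple (wseq B L b))) ?subrr; last exact: hS.
move=> /(_ erefl).
under eq_bigr do rewrite scalerBl.
by rewrite sumrB hsum eBt => /eqP; rewrite subr_eq0 => /eqP.
Qed.

Lemma TR_of B Bt L b b' : SP Bt L (b (+) b') ->
  (exists c : K, c != 0 /\ forall w : seq 'I_N, size w = (L + L)%N ->
      wparity p w = b' -> \tr (wprod B w) = c * \tr (wprod Bt w)) ->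
  TR B Bt L b.
Proof.
move=> hS [c [c0 hc]] a ha.
apply: (tr_nondeg (s := wseq Bt L (b (+) b'))) => // x /wseq_inv [u [hu ->]].
have H : forall k : 'I_(size (wseq B L b)),
    \tr ((wseq Bt L b)`_k *m wprod Bt u) = c^-1 * \tr ((wseq B L b)`_k *m wprod B u).
  move=> k; have [t [ht -> ->]] := wseq_nth Bt (ltn_ord k).
  rewrite -!wprod_cat hc ?mulKf // ?size_cat ?size_tuple //.
  by rewrite wparity_cat ht hu addKb.
have H2 : \tr ((\sum_k a k *: (wseq B L b)`_k) *m wprod B u) = 0.
  by rewrite ha mul0mx mxtrace0.
rewrite mulmx_suml raddf_sum.
under eq_bigr do rewrite /= -scalemxAl mxtraceZ H mulrCA.
rewrite -mulr_sumr; apply/eqP; rewrite mulf_eq0 invr_eq0 (negbTE c0) /=.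
apply/eqP; rewrite -[RHS]H2 mulmx_suml raddf_sum; apply: eq_bigr => k _.
by rewrite /= -scalemxAl mxtraceZ.
Qed.

Definition WM B Bt (F : 'M[K]_n -> 'M[K]_n) L b :=
  islin F /\ forall t : L.-tuple 'I_N, wparity p t = b -> F (wprod B t) = wprod Bt t.

Lemma WM_Phi B Bt L b : SP B L b -> TR B Bt L b -> WM B Bt (Phi B Bt L b) L b.
Proof. by move=> hS hT; split; [exact: Phi_lin | exact: Phi_word]. Qed.

Lemma WM_prod B Bt F1 F2 F3 L M b1 b2 :
  WM B Bt F1 L b1 -> WM B Bt F2 M b2 -> WM B Bt F3 (L + M) (b1 (+) b2) ->
  SP B L b1 -> SP B M b2 -> forall X Y, F3 (X *m Y) = F1 X *m F2 Y.
Proof.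
move=> [l1 w1] [l2 w2] [l3 w3] s1 s2.
have step1 : forall u : M.-tuple 'I_N, wparity p u = b2 ->
    forall X, F3 (X *m wprod B u) = F1 X *m wprod Bt u.
  move=> u hu X.
  apply: (@span_ext _ _ _ (wseq B L b1) (fun X => F3 (X *m wprod B u))
                    (fun X => F1 X *m wprod Bt u)) => //.
  - by move=> a x y /=; rewrite mulmxDl -scalemxAl l3.
  - by move=> a x y /=; rewrite l1 mulmxDl -scalemxAl.
  move=> x /wseq_inv [t [ht ->]].
  rewrite -!wprod_cat -[t ++ u]/(val (cat_tuple t u)) w3 ?w1 //.
  by rewrite wprod_cat.
  by rewrite /= wparity_cat ht hu.
move=> X Y.
apply: (@span_ext _ _ _ (wseq B M b2) (fun Y => F3 (X *m Y))
                  (fun Y => F1 X *m F2 Y)) => //.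
- by move=> a x y /=; rewrite mulmxDr -scalemxAr l3.
- by move=> a x y /=; rewrite l2 mulmxDr -scalemxAr.
by move=> x /wseq_inv [u [hu ->]]; rewrite step1 ?w2.
Qed.

Lemma WM_single B Bt F1 F3 L b (i : 'I_N) :
  WM B Bt F1 L b -> WM B Bt F3 L.+1 (p i (+) b) -> SP B L b ->
  forall X, F3 (B i *m X) = Bt i *m F1 X.
Proof.
move=> [l1 w1] [l3 w3] s1 X.
apply: (@span_ext _ _ _ (wseq B L b) (fun X => F3 (B i *m X))
                  (fun X => Bt i *m F1 X)) => //.
- by move=> a x y /=; rewrite mulmxDr -scalemxAr l3.
- by move=> a x y /=; rewrite l1 mulmxDr -scalemxAr.
move=> x /wseq_inv [t [ht ->]].
rewrite -[B i *m _]/(wprod B (val (cons_tuple i t))) w3; last first.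
  by rewrite /= wparity_cons ht.
by rewrite w1.
Qed.

Lemma WM_surj B Bt F L b : WM B Bt F L b -> SP Bt L b -> forall Y, exists X, F X = Y.
Proof.
move=> [l w] hS Y.
have := coord_span (X := in_tuple (wseq Bt L b)) (hS Y) => ->.
exists (\sum_k coord (in_tuple (wseq Bt L b)) k Y *: (wseq B L b)`_k).
rewrite islin_sum //; apply: eq_bigr => k _.
have [t [ht -> ->]] := wseq_nth B (ltn_ord k).
by rewrite w.
Qed.

Lemma SP_ge B Bd l : SP B l false -> SP B l true ->
  \sum_i B i *m Bd i = 1%:M -> forall L, (l <= L)%N -> forall b, SP B L b.
Proof.
move=> h0 h1 hn L hL.
rewrite -(subnKC hL); elim: (L - l)%N => [|k IH]; first by case; rewrite addn0.
by move=> b; rewrite addnS; apply: (SP_succ _ (IH false) (IH true) hn).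
Qed.

Lemma wprod_zero B (w : seq 'I_N) (i : 'I_N) : i \in w -> B i = 0 -> wprod B w = 0.
Proof.
elim: w => [|j w IH] //=; rewrite inE => /orP [/eqP <- -> | hi hB].
  by rewrite mul0mx.
by rewrite IH // mulmx0.
Qed.

Lemma letter_exists B l (i0 : 'I_n) : SP B l false -> SP B l true ->
  forall b, exists i, p i = b /\ B i != 0.
Proof.
move=> h0 h1 b.
case: (boolP [exists i, (p i == b) && (B i != 0)]).
  by case/existsP => i /andP [/eqP hp hB]; exists i.
rewrite negb_exists => /forallP hne; exfalso.
have hz : forall i, p i = b -> B i = 0.
  by move=> i hp; have := hne i; rewrite hp eqxx /= negbK => /eqP.
pose q := if b then false else odd l.
have hw : forall t : l.-tuple 'I_N, wparity p t = ~~ q -> wprod B t = 0.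
  move=> t ht; case: (boolP (has (fun i => p i == b) t)) => [/hasP [i hi /eqP hpi]|hn].
    exact: wprod_zero hi (hz i hpi).
  exfalso; have hc : count p t = count (fun _ => ~~ b) t.
    apply: eq_in_count => i hi; have := hasPn hn i hi.
    by case: (p i); case: (b).
  move: ht; rewrite /wparity hc /q; case: (b) => /=.
    by rewrite count_pred0.
  by rewrite count_predT size_tuple; case: (odd l).
have hsp : SP B l (~~ q) by case: (~~ q).
have e : (1%:M : 'M[K]_n) = (fun _ => 0) (1%:M : 'M[K]_n).
  apply: (@span_ext _ _ _ (wseq B l (~~ q)) id (fun _ => 0)) => //.
  - by move=> a x y; rewrite scaler0 addr0.
  - by move=> x /wseq_inv [t [ht ->]]; rewrite hw.
have h10 : (1%:M : 'M[K]_n) != 0.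
  by apply/negP => /eqP/matrixP/(_ i0 i0); rewrite !mxE eqxx => /eqP; rewrite oner_eq0.
by rewrite e eqxx in h10.
Qed.

End Words.

Section Core.
Variables (K : fieldType) (N n : nat) (p : 'I_N -> bool) (i0 : 'I_n).
Variables (B Bt : 'I_N -> 'M[K]_n) (A G H Kf : bool -> 'M[K]_n -> 'M[K]_n).
Hypothesis linA : forall b, islin (A b).
Hypothesis linG : forall b, islin (G b).
Hypothesis linH : forall b, islin (H b).
Hypothesis surjA : forall b Y, exists X, A b X = Y.
Hypothesis surjG : forall Y, exists X, G false X = Y.
Hypothesis hG : forall b1 b2 X Y, G (b1 (+) b2) (X *m Y) = A b1 X *m A b2 Y.
Hypothesis hK1 : forall b1 b2 X Y, Kf (b1 (+) b2) (X *m Y) = H b1 X *m A b2 Y.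
Hypothesis hK2 : forall b1 b2 X Y, Kf (b2 (+) b1) (Y *m X) = A b2 Y *m H b1 X.
Hypothesis hsingle : forall i, H (p i) (B i) = Bt i *m A false 1%:M.

Lemma one_neq0 : (1%:M : 'M[K]_n) != 0.
Proof. by apply/negP => /eqP/matrixP/(_ i0 i0); rewrite !mxE eqxx => /eqP; rewrite oner_eq0. Qed.

Lemma scal_of (Z : 'M[K]_n) (F : 'M[K]_n -> 'M[K]_n) :
  (forall Y, exists X, F X = Y) -> (forall X, Z *m F X = F X *m Z) -> Z = (Z i0 i0)%:M.
Proof.
move=> hs hc; apply: comm_scalar => Y; have [X <-] := hs Y; exact: hc.
Qed.

Lemma core : exists (S : 'M[K]_n) (mu eta : K), [/\ S \in unitmx, eta ^+ 2 = 1 &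
  forall i, Bt i = (mu * eta ^+ p i) *: (S *m B i *m invmx S)].
Proof.
pose a0 := A false 1%:M; pose a1 := A true 1%:M.
have G0l : forall Y, G false Y = a0 *m A false Y.
  by move=> Y; rewrite -(hG false false) mul1mx.
have G0r : forall Y, G false Y = A false Y *m a0.
  by move=> Y; rewrite -(hG false false) mulmx1.
have G1l : forall Y, G false Y = a1 *m A true Y.
  by move=> Y; rewrite -(hG true true) mul1mx.
have G1r : forall Y, G false Y = A true Y *m a1.
  by move=> Y; rewrite -(hG true true) mulmx1.
set al := a0 i0 i0; set ga := a1 i0 i0.
have ea0 : a0 = al%:M by apply: (scal_of (surjA false)) => X; rewrite -G0l G0r.
have ea1 : a1 = ga%:M by apply: (scal_of (surjA true)) => X; rewrite -G1l G1r.
have GA0 : forall Y, G false Y = al *: A false Y by move=> Y; rewrite G0l ea0 mul_scalar_mx.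
have GA1 : forall Y, G false Y = ga *: A true Y by move=> Y; rewrite G1l ea1 mul_scalar_mx.
have al0 : al != 0.
  apply/negP => /eqP h; have [X hX] := surjG 1%:M.
  by move: one_neq0; rewrite -hX GA0 h scale0r eqxx.
have ga0 : ga != 0.
  apply/negP => /eqP h; have [X hX] := surjG 1%:M.
  by move: one_neq0; rewrite -hX GA1 h scale0r eqxx.
pose eta := al / ga.
have A1 : forall Y, A true Y = eta *: A false Y.
  move=> Y; apply: (@scalerI _ _ ga) => //.
  by rewrite -GA1 GA0 scalerA /eta mulrCA divff // mulr1.
have eta2 : eta ^+ 2 = 1.
  have := congr1 (fun M : 'M[K]_n => M i0 i0) (GA0 1%:M).
  rewrite GA1 -/a0 -/a1 ea0 ea1 !mxE eqxx !mulr1n => e.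
  by rewrite /eta expr_div_n !expr2 e divff // mulf_neq0.
pose th := fun X => al^-1 *: A false X.
have thl : islin th.
  by move=> a x y; rewrite /th (linA false) scalerDr !scalerA mulrC.
have thm : forall X Y, th (X *m Y) = th X *m th Y.
  move=> X Y; have e := hG false false X Y; rewrite /= GA0 in e.
  rewrite /th -scalemxAl -scalemxAr -e !scalerA.
  by rewrite mulfVK.
have th1 : th 1%:M != 0.
  by rewrite /th -/a0 ea0 scale_scalar_mx mulVf // one_neq0.
have [S [Su hS]] := skolem_noether i0 thl thm th1.
have A0S : forall X, A false X = al *: (S *m X *m invmx S).
  move=> X; rewrite -hS mulmxK // /th scalerA divff // scale1r //.
pose h0 := H false 1%:M.
have Kl : forall b Y, Kf b Y = h0 *m A b Y.
  by move=> b Y; rewrite -(hK1 false b) mul1mx.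
have Kr : forall b Y, Kf b Y = A b Y *m h0.
  by move=> b Y; rewrite -[b in Kf b](addbF b) -(hK2 false b) mulmx1.
set ze := h0 i0 i0.
have eh0 : h0 = ze%:M by apply: (scal_of (surjA false)) => X; rewrite -Kl Kr.
have KH : forall b X, Kf b X = H b X *m a0.
  by move=> b X; rewrite -[b in Kf b](addbF b) -(hK1 b false) mulmx1.
have HA : forall b X, H b X = (ze / al) *: A b X.
  move=> b X; apply: (@scalerI _ _ al) => //.
  rewrite scalerA mulrCA divff // mulr1 -[ze *: _]mul_scalar_mx -eh0 -Kl KH ea0.
  by rewrite mul_mx_scalar.
exists S, (ze / al), eta; split => // i.
have e := hsingle i; rewrite -/a0 ea0 mul_mx_scalar HA in e.
apply: (@scalerI _ _ al) => //; rewrite -e scalerA.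
have -> : A (p i) (B i) = (eta ^+ p i) *: A false (B i).
  by case: (p i); rewrite ?A1 ?expr1 ?expr0 ?scale1r.
rewrite A0S !scalerA; congr (_ *: _).
by rewrite mulrC.
Qed.

End Core.

Section Unitarize.
Variable C : numClosedFieldType.
Local Open Scope sesquilinear_scope.

Lemma adjM m k q (A : 'M[C]_(m, k)) (B : 'M[C]_(k, q)) : (A *m B)^t* = B^t* *m A^t*.
Proof. by rewrite trmx_mul map_mxM. Qed.

Lemma adjZ m k (a : C) (A : 'M[C]_(m, k)) : (a *: A)^t* = a^* *: A^t*.
Proof. by apply/matrixP => r s; rewrite !mxE rmorphM. Qed.

Lemma adj1 k : (1%:M : 'M[C]_k)^t* = 1%:M.
Proof. by rewrite trmx1 map_mx1. Qed.

Lemma adjE m k (A : 'M[C]_(m, k)) i j : (A^t*) i j = (A j i)^*.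
Proof. by rewrite !mxE. Qed.

Lemma adj_sum m k I (r : seq I) (F : I -> 'M[C]_(m, k)) :
  (\sum_(i <- r) F i)^t* = \sum_(i <- r) (F i)^t*.
Proof.
elim/big_rec2: _ => [|i y1 y2 _ <-].
  by apply/matrixP => a b; rewrite !mxE conjC0.
by apply/matrixP => a b; rewrite !mxE rmorphD.
Qed.

Lemma unitary_adjK k (U : 'M[C]_k) : U \is unitarymx -> U^t* *m U = 1%:M.
Proof. by move=> hU; rewrite -invmx_unitary // mulVmx // unitarymx_unit. Qed.

Lemma unitary_K k (U : 'M[C]_k) : U \is unitarymx -> U *m U^t* = 1%:M.
Proof. by move/unitarymxP. Qed.

Lemma entry_XXt k (X : 'M[C]_k) j : (X *m X^t*) j j = \sum_m X j m * (X j m)^*.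
Proof. by rewrite !mxE; apply: eq_bigr => m _; rewrite !mxE. Qed.

Lemma entry_XDXt k (X : 'M[C]_k) (d : 'rV[C]_k) j :
  (X *m diag_mx d *m X^t*) j j = \sum_m X j m * d 0 m * (X j m)^*.
Proof. by rewrite !mxE; apply: eq_bigr => m _; rewrite mul_mx_diag !mxE. Qed.

Lemma exists_max k (i0 : 'I_k) (f : 'I_k -> C) : (forall j, f j \is Num.real) ->
  exists j, forall m, f m <= f j.
Proof.
move=> hr.
suff : forall s : seq 'I_k, exists j, forall m, m \in s -> f m <= f j.
  by case/(_ (enum 'I_k)) => j hj; exists j => m; apply: hj; rewrite mem_enum.
elim => [|x s [j hj]]; first by exists i0.
have [hxj|hjx] := boolP (f x <= f j).
  by exists j => m; rewrite inE => /orP [/eqP ->|/hj].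
have hjx' : f j <= f x by case/orP: (real_leVge (hr x) (hr j)) => // h; rewrite h in hjx.
exists x => m; rewrite inE => /orP [/eqP ->|/hj h]; first by [].
exact: le_trans h hjx'.
Qed.


Lemma nneg_conj (x : C) : 0 <= x * x^*.
Proof. by rewrite -normCK exprn_ge0. Qed.

Lemma conj_eq0P (x : C) : x * x^* = 0 -> x = 0.
Proof. by move/eqP; rewrite mulf_eq0 conjC_eq0 orbb => /eqP. Qed.

Variables (N n : nat) (p : 'I_N -> bool) (i0 : 'I_n).

Lemma unitarize (B Bt : 'I_N -> 'M[C]_n) (S : 'M[C]_n) (mu eta : C) :
  S \in unitmx -> eta ^+ 2 = 1 ->
  (forall i, Bt i = (mu * eta ^+ p i) *: (S *m B i *m invmx S)) ->
  \sum_i B i *m (B i)^t* = 1%:M -> \sum_i Bt i *m (Bt i)^t* = 1%:M ->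
  (forall f : 'M[C]_n -> C^o, islin f -> (forall w, f (wprod B w) = 0) ->
     forall Y, f Y = 0) ->
  exists v, [/\ v \is unitarymx, `|mu| = 1 &
    forall i, Bt i = (mu * eta ^+ p i) *: (v^t* *m B i *m v)].
Proof.
move=> Su eta2 hBt nB nBt hspan.
have etaR : eta^* = eta.
  apply: conj_Creal; move/eqP: eta2; rewrite sqrf_eq1 => /orP [] /eqP ->.
    exact: rpred1.
  exact: rpredN1.
pose M := invmx S.
have Mu : M \in unitmx by rewrite unitmx_inv.
pose P := M *m M^t*.
pose r := mu * mu^*.
pose Q := \sum_i B i *m P *m (B i)^t*.
have hPQ : r *: Q = P.
  have e1 : forall i, Bt i *m (Bt i)^t* = r *: (S *m (B i *m P *m (B i)^t*) *m S^t*).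
    move=> i; rewrite hBt adjZ -scalemxAl -scalemxAr scalerA !adjM.
    congr (_ *: _).
      rewrite rmorphM rmorphXn /= etaR mulrACA -exprMn -expr2 eta2 expr1n mulr1.
      by [].
    by rewrite /P !mulmxA.
  have e2 : 1%:M = r *: (S *m Q *m S^t*).
    rewrite -nBt (eq_bigr _ (fun i _ => e1 i)) -scaler_sumr; congr (_ *: _).
    by rewrite /Q mulmx_sumr mulmx_suml.
  have : M *m 1%:M *m M^t* = r *: (M *m S *m Q *m (M *m S)^t*).
    by rewrite e2 -scalemxAr -scalemxAl adjM !mulmxA.
  by rewrite mulmx1 mulVmx // mul1mx adj1 mulmx1 => <-.
have Padj : P^t* = P by rewrite /P adjM trmxCK.
have Pn : P \is normalmx by apply/normalmxP; rewrite Padj.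
pose U := spectralmx P; pose d := spectral_diag P.
have Uu : U \is unitarymx := spectral_unitarymx P.
have PD : P = U^t* *m diag_mx d *m U.
  by move/orthomx_spectralP: Pn => {1}->; rewrite invmx_unitary.
pose D := diag_mx d.
have DP : D = U *m P *m U^t*.
  by rewrite PD !mulmxA unitary_K // mul1mx -mulmxA unitary_K // mulmx1.
pose Y := U *m M.
have DY : D = Y *m Y^t* by rewrite DP /P /Y adjM !mulmxA.
pose B' i := U *m B i *m U^t*.
have nB' : \sum_i B' i *m (B' i)^t* = 1%:M.
  rewrite (eq_bigr (fun i => U *m (B i *m (B i)^t*) *m U^t*)); last first.
    move=> i _; rewrite /B' !adjM trmxCK !mulmxA -[_ *m U^t* *m U]mulmxA.
    by rewrite unitary_adjK // mulmx1.
  by rewrite -mulmx_suml -mulmx_sumr nB mulmx1 unitary_K.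
have eqD : r *: \sum_i B' i *m D *m (B' i)^t* = D.
  rewrite (eq_bigr (fun i => U *m (B i *m P *m (B i)^t*) *m U^t*)); last first.
    move=> i _; rewrite /B' DP !adjM trmxCK !mulmxA -[_ *m U^t* *m U]mulmxA.
    rewrite unitary_adjK // mulmx1 -[_ *m U^t* *m U]mulmxA unitary_adjK // mulmx1.
    by [].
  rewrite -mulmx_suml -mulmx_sumr -/Q.
  by rewrite scalemxAl scalemxAr hPQ DP.
pose dd j := d 0 j.
have Dj : forall j, D j j = dd j by move=> j; rewrite /D mxE eqxx mulr1n.
have dE : forall j, dd j = \sum_m Y j m * (Y j m)^*.
  by move=> j; rewrite -Dj DY entry_XXt.
have Yu : Y \in unitmx by rewrite unitmx_mul Mu unitarymx_unit.
have dpos : forall j, 0 < dd j.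
  move=> j; rewrite lt0r dE sumr_ge0 ?andbT; last by move=> m _; apply: nneg_conj.
  apply/negP => /eqP h0.
  have hY : forall m, Y j m = 0.
    move=> m; apply: conj_eq0P.
    exact: (psumr_eq0P (fun m _ => nneg_conj (Y j m)) h0).
  have := congr1 (fun X : 'M[C]_n => X j j) (mulmxV Yu).
  rewrite !mxE eqxx big1 ?mulr1n; last by move=> m _; rewrite hY mul0r.
  by move/eqP; rewrite eq_sym oner_eq0.
pose T j m := \sum_i B' i j m * (B' i j m)^*.
have Tge0 : forall j m, 0 <= T j m by move=> j m; apply: sumr_ge0 => i _; apply: nneg_conj.
have Trow : forall j, \sum_m T j m = 1.
  move=> j; have := congr1 (fun X : 'M[C]_n => X j j) nB'.
  rewrite summxE mxE eqxx mulr1n => <-; rewrite /T exchange_big /=.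
  by apply: eq_bigr => i _; rewrite entry_XXt.
have Teq : forall j, r * \sum_m T j m * dd m = dd j.
  move=> j; have := congr1 (fun X : 'M[C]_n => X j j) eqD.
  rewrite Dj mxE summxE => <-; congr (_ * _).
  rewrite /T; under eq_bigr do rewrite mulr_suml.
  rewrite exchange_big /=; apply: eq_bigr => i _.
  by rewrite entry_XDXt; apply: eq_bigr => m _; rewrite mulrAC.
have dR : forall j, dd j \is Num.real by move=> j; apply: ger0_real; apply: ltW.
have rge0 : 0 <= r by apply: nneg_conj.
have [jM hM] := exists_max i0 dR.
have [jm hm] := exists_max i0 (f := fun j => - dd j) (fun j => etrans (rpredN _ _) (dR j)).
have sumTc : forall j c, \sum_m T j m * c = c by move=> j c; rewrite -mulr_suml Trow mul1r.
have r1 : r = 1.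
  apply/le_anti/andP; split.
    rewrite -(ler_pM2r (dpos jm)) mul1r.
    rewrite -{2}(Teq jm); apply: ler_wpM2l => //.
    rewrite -{1}(sumTc jm (dd jm)); apply: ler_sum => m _.
    by apply: ler_wpM2l => //; rewrite -lerN2; apply: hm.
  rewrite -(ler_pM2r (dpos jM)) mul1r.
  rewrite -{1}(Teq jM); apply: ler_wpM2l => //.
  rewrite -(sumTc jM (dd jM)); apply: ler_sum => m _.
  by apply: ler_wpM2l => //; apply: hM.
have mu1 : `|mu| = 1.
  by apply/eqP; rewrite -sqrp_eq1 ?normr_ge0 // normCK -/r r1.
pose dM := dd jM.
have zeroT : forall j m, dd j = dM -> dd m != dM -> T j m = 0.
  move=> j m hj hmM.
  have h0 : \sum_k T j k * (dM - dd k) = 0.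
    under eq_bigr do rewrite mulrBr.
    by rewrite sumrB sumTc -[X in _ - X]mul1r -r1 Teq hj subrr.
  have hnn : forall k, true -> 0 <= T j k * (dM - dd k).
    by move=> k _; apply: mulr_ge0 => //; rewrite subr_ge0; apply: hM.
  move: (psumr_eq0P hnn h0 (i:=m) isT) => /eqP.
  by rewrite mulf_eq0 subr_eq0 [dM == _]eq_sym (negbTE hmM) orbF => /eqP.
have zeroB : forall i j m, dd j = dM -> dd m != dM -> B' i j m = 0.
  move=> i j m hj hmM; apply: conj_eq0P.
  have h0 := zeroT j m hj hmM.
  exact: (psumr_eq0P (fun i _ => nneg_conj (B' i j m)) h0 (i:=i) isT).
have wordB : forall w j m, dd j = dM -> dd m != dM ->
    (U *m wprod B w *m U^t*) j m = 0.
  elim => [|i w IH] j m hj hmM /=.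
    rewrite mulmx1 unitary_K // mxE.
    by case: eqP => // ejm; rewrite -ejm hj eqxx in hmM.
  have -> : U *m (B i *m wprod B w) *m U^t* = B' i *m (U *m wprod B w *m U^t*).
    by rewrite /B' !mulmxA -[_ *m U^t* *m U]mulmxA unitary_adjK // mulmx1.
  rewrite mxE big1 // => k _.
  have [hk|hk] := eqVneq (dd k) dM; first by rewrite IH // mulr0.
  by rewrite zeroB // mul0r.
have allmax : forall m, dd m = dM.
  move=> m; apply/eqP/negPn/negP => hmM.
  have hf := hspan (fun X => (U *m X *m U^t*) jM m : C^o).
  have := hf _ _ (U^t* *m delta_mx jM m *m U).
  rewrite !mulmxA unitary_K // mul1mx -mulmxA unitary_K // mulmx1 mxE !eqxx /=.
  move=> h; have : (1 : C) = 0.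
    apply: h.
      move=> a x y; rewrite mulmxDr mulmxDl -scalemxAr -scalemxAl.
      by rewrite mxE [X in X + _]mxE.
    by move=> w; apply: wordB.
  by move/eqP; rewrite oner_eq0.
have Dsc : D = dM%:M.
  apply/matrixP => a b; rewrite /D !mxE; case: eqP => [->|_]; last by [].
  by rewrite !mulr1n; apply: allmax.
have Psc : M *m M^t* = dM%:M.
  rewrite -/P PD -/D Dsc mul_mx_scalar -scalemxAl unitary_adjK //.
  by rewrite scalemx1.
have dMpos : 0 < dM := dpos jM.
pose s := sqrtC dM.
have spos : 0 < s by rewrite sqrtC_gt0.
have sR : s^* = s by apply: conj_Creal; apply: sqrtC_real; apply: ltW.
have s2 : s * s = dM by rewrite -expr2 sqrtCK.
have s0 : s != 0 by rewrite gt_eqF.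
pose v := s^-1 *: M.
have vadj : v^t* = s^-1 *: M^t* by rewrite adjZ fmorphV /= sR.
have MS : M^t* = dM *: S.
  by rewrite -[M^t*]mul1mx -(mulmxV Su) -mulmxA Psc mul_mx_scalar.
exists v; split => //.
  apply/unitarymxP; rewrite vadj -scalemxAl -scalemxAr scalerA Psc.
  by rewrite scale_scalar_mx -s2 mulrA mulfVK // mulVf.
move=> i; rewrite hBt vadj MS; congr (_ *: _).
rewrite -!scalemxAl -scalemxAr !scalerA -s2.
by rewrite mulrA mulVf // mul1r divff // scale1r.
Qed.

Lemma prod_kappa (c eta : C) (w : seq 'I_N) :
  \prod_(i <- w) (c * eta ^+ p i) = c ^+ size w * eta ^+ count p w.
Proof.
elim: w => [|i w IH]; first by rewrite big_nil mulr1.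
by rewrite big_cons IH /= exprS exprD mulrACA.
Qed.

Lemma words_gauge (B Bt : 'I_N -> 'M[C]_n) (kap : 'I_N -> C) v :
  v \is unitarymx -> (forall i, Bt i = kap i *: (v^t* *m B i *m v)) ->
  forall w, wprod Bt w = (\prod_(i <- w) kap i) *: (v^t* *m wprod B w *m v).
Proof.
move=> vu hB; elim => [|i w IH] /=; first by rewrite big_nil scale1r mulmx1 unitary_adjK.
rewrite big_cons hB IH -scalemxAl -scalemxAr scalerA; congr (_ *: _).
by rewrite !mulmxA -[_ *m v *m v^t*]mulmxA unitary_K // mulmx1.
Qed.

Lemma gauge_unique (B Bt : 'I_N -> 'M[C]_n) l (c eta c' eta' : C) (v v' : 'M[C]_n) :
  SP p B l false -> (forall b, exists i, p i = b /\ B i != 0) ->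
  `|c| = 1 -> eta ^+ 2 = 1 -> v \is unitarymx ->
  (forall i, Bt i = (c * eta ^+ p i) *: (v^t* *m B i *m v)) ->
  `|c'| = 1 -> eta' ^+ 2 = 1 -> v' \is unitarymx ->
  (forall i, Bt i = (c' * eta' ^+ p i) *: (v'^t* *m B i *m v')) ->
  [/\ c' = c, eta' = eta & exists2 lam : C, `|lam| = 1 & v' = lam *: v].
Proof.
move=> hS hlet c1 e2 vu hB c1' e2' vu' hB'.
have c0 : c != 0 by rewrite -normr_eq0 c1 oner_eq0.
have c0' : c' != 0 by rewrite -normr_eq0 c1' oner_eq0.
have pev : forall (a e : C) (t : l.-tuple 'I_N), e ^+ 2 = 1 -> wparity p t = false ->
    \prod_(i <- t) (a * e ^+ p i) = a ^+ l.
  move=> a e t he ht; rewrite prod_kappa size_tuple.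
  move: ht; rewrite /wparity => ho.
  by rewrite -(odd_double_half (count p t)) ho add0n -muln2 mulnC exprM he expr1n mulr1.
have E : forall X, c ^+ l *: (v^t* *m X *m v) = c' ^+ l *: (v'^t* *m X *m v').
  move=> X.
  apply: (@span_ext _ _ _ (wseq p B l false) (fun X => c ^+ l *: (v^t* *m X *m v))
           (fun X => c' ^+ l *: (v'^t* *m X *m v'))) => //.
  - by move=> a x y /=; rewrite mulmxDr mulmxDl scalerDr -scalemxAr -scalemxAl !scalerA mulrC.
  - by move=> a x y /=; rewrite mulmxDr mulmxDl scalerDr -scalemxAr -scalemxAl !scalerA mulrC.
  move=> x /wseq_inv [t [ht ->]].
  rewrite -(pev c eta t) // -(pev c' eta' t) //.
  by rewrite -(words_gauge vu hB) -(words_gauge vu' hB').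
pose u := v' *m v^t*.
have E2 : forall X, c ^+ l *: (u *m X) = c' ^+ l *: (X *m u).
  move=> X; have := congr1 (fun Z => v' *m Z *m v^t*) (E X).
  rewrite /= -!scalemxAr -!scalemxAl.
  have -> : v' *m (v^t* *m X *m v) *m v^t* = u *m X.
    by rewrite /u !mulmxA -[_ *m v *m v^t*]mulmxA unitary_K // mulmx1.
  have -> : v' *m (v'^t* *m X *m v') *m v^t* = X *m u.
    by rewrite /u !mulmxA unitary_K // mul1mx.
  by [].
have uu : u *m u^t* = 1%:M.
  by rewrite /u adjM trmxCK !mulmxA -[_ *m v^t* *m v]mulmxA unitary_adjK // mulmx1 unitary_K.
have u0 : u != 0.
  apply/negP => /eqP h; move: uu; rewrite h mul0mx => /matrixP/(_ i0 i0).
  by rewrite !mxE eqxx => /eqP; rewrite eq_sym oner_eq0.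
have cl : c ^+ l = c' ^+ l.
  have := E2 1%:M; rewrite mulmx1 mul1mx => /eqP; rewrite -subr_eq0 -scalerBl.
  by rewrite scaler_eq0 (negbTE u0) orbF subr_eq0 => /eqP.
have ucomm : forall X, u *m X = X *m u.
  move=> X; apply: (@scalerI _ _ (c ^+ l)); first by rewrite expf_neq0.
  by rewrite E2 cl.
pose lam := u i0 i0.
have ul : u = lam%:M := comm_scalar i0 ucomm.
have v'E : v' = lam *: v.
  by rewrite -mul_scalar_mx -ul /u -mulmxA unitary_adjK // mulmx1.
have ll : lam * lam^* = 1.
  have := unitary_K vu'; rewrite v'E adjZ -scalemxAl -scalemxAr scalerA.
  rewrite unitary_K // scalemx1 => /matrixP/(_ i0 i0); rewrite !mxE eqxx !mulr1n.
  by [].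
have lam1 : `|lam| = 1.
  by apply/eqP; rewrite -sqrp_eq1 ?normr_ge0 // normCK ll.
have W : forall i, v'^t* *m B i *m v' = v^t* *m B i *m v.
  move=> i; rewrite v'E adjZ -scalemxAl -scalemxAr -scalemxAl scalerA.
  by rewrite [lam * _]ll scale1r.
have hi : forall i, B i != 0 -> c' * eta' ^+ p i = c * eta ^+ p i.
  move=> i Bi0; have := hB i; rewrite hB' W => /eqP; rewrite -subr_eq0 -scalerBl.
  rewrite scaler_eq0 subr_eq0 => /orP [/eqP //|/eqP W0].
  have eB : v *m (v^t* *m B i *m v) *m v^t* = B i.
    by rewrite !mulmxA unitary_K // mul1mx -mulmxA unitary_K // mulmx1.
  by move: Bi0; rewrite -eB W0 mulmx0 mul0mx eqxx.
have [i1 [pf Bf]] := hlet false.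
have [i2 [pt Bt2]] := hlet true.
have cc : c' = c by have := hi i1 Bf; rewrite pf !expr0 !mulr1.
split => //; last by exists lam.
by have := hi i2 Bt2; rewrite pt !expr1 cc => /(mulfI c0).
Qed.

End Unitarize.

Section Main.
Local Open Scope sesquilinear_scope.

Lemma existence (C : numClosedFieldType) (N n : nat) (p : 'I_N -> bool) (i0 : 'I_n)
  (B Bt : 'I_N -> 'M[C]_n) (l : nat) (b' : bool) :
  \sum_(i < N) B i *m (B i)^t* = 1%:M ->
  \sum_(i < N) Bt i *m (Bt i)^t* = 1%:M ->
  SP p B l false -> SP p B l true -> SP p Bt l false -> SP p Bt l true ->
  (forall L : nat, exists c : C, `|c| = 1 /\
    forall w : seq 'I_N, size w = L -> wparity p w = b' ->
      \tr (wprod B w) = c * \tr (wprod Bt w)) ->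
  exists (c eta : C) (v : 'M[C]_n),
    [/\ `|c| = 1, eta ^+ 2 = 1, v \is unitarymx &
        forall i, Bt i = (c * eta ^+ p i) *: (v^t* *m B i *m v)].
Proof.
move=> nB nBt sB0 sB1 sBt0 sBt1 htr.
have SPB : forall L, (l <= L)%N -> forall b, SP p B L b.
  by move=> L hL b; apply: (SP_ge sB0 sB1 nB hL).
have SPBt : forall L, (l <= L)%N -> forall b, SP p Bt L b.
  by move=> L hL b; apply: (SP_ge sBt0 sBt1 nBt hL).
have TRall : forall L, (l <= L)%N -> forall b, TR p B Bt L b.
  move=> L hL b; apply: (TR_of (b' := b')); first exact: SPBt.
  have [c [c1 hc]] := htr (L + L)%N; exists c; split => //.
  by rewrite -normr_eq0 c1 oner_eq0.
have WMall : forall L, (l <= L)%N -> forall b, WM p B Bt (Phi p B Bt L b) L b.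
  by move=> L hL b; apply: WM_Phi; [exact: SPB | exact: TRall].
pose A b := Phi p B Bt l b.
pose G b := Phi p B Bt (l + l) b.
pose H b := Phi p B Bt l.+1 b.
pose Kf b := Phi p B Bt (l.+1 + l) b.
have hl : (l <= l)%N by [].
have hll : (l <= l + l)%N by rewrite leq_addr.
have hl1 : (l <= l.+1)%N by [].
have hl1l : (l <= l.+1 + l)%N by rewrite leq_addl.
have e : (l + l.+1 = l.+1 + l)%N by rewrite addnS addSn.
have WK2 : forall b, WM p B Bt (Kf b) (l + l.+1) b.
  by move=> b; rewrite e; apply: WMall.
have [S [mu [eta [Su e2 hBt]]]] : exists (S : 'M[C]_n) (mu eta : C), [/\ S \in unitmx, eta ^+ 2 = 1 &
    forall i, Bt i = (mu * eta ^+ p i) *: (S *m B i *m invmx S)].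
  apply: (@core _ _ _ p i0 B Bt A G H Kf).
  - by move=> b; case: (WMall l hl b).
  - by move=> b; apply: (WM_surj (WMall l hl b)); apply: SPBt.
  - by apply: (WM_surj (WMall _ hll false)); apply: SPBt.
  - move=> b1 b2; apply: (WM_prod (WMall l hl b1) (WMall l hl b2) (WMall _ hll _)).
      exact: SPB.
    exact: SPB.
  - move=> b1 b2; apply: (WM_prod (WMall _ hl1 b1) (WMall l hl b2) (WMall _ hl1l _)).
      exact: SPB.
    exact: SPB.
  - move=> b1 b2 X Y; apply: (WM_prod (WMall l hl b2) (WMall _ hl1 b1) (WK2 _)).
      exact: SPB.
    exact: SPB.
  - move=> i; have := WM_single (WMall l hl false) (WMall _ hl1 (p i (+) false)) (SPB l hl false) 1%:M.
    by rewrite mulmx1 addbF.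
have hspan : forall f : 'M[C]_n -> C^o, islin f -> (forall w, f (wprod B w) = 0) ->
    forall Y, f Y = 0.
  move=> f hf hw Y.
  apply: (@span_ext _ _ _ (wseq p B l false) f (fun _ => 0 : C^o)) => //.
  - by move=> a x y; rewrite scaler0 addr0.
  - by move=> x /wseq_inv [t [_ ->]]; apply: hw.
have [v [vu mu1 hv]] := unitarize i0 Su e2 hBt nB nBt hspan.
by exists mu, eta, v.
Qed.

End Main.

Unset Implicit Arguments.

Theorem mainTheorem3 (R : realType) (N n : nat) (p : 'I_N -> bool)
  (B Bt : 'I_N -> 'M[R[i]]_n) :
  (0 < N)%N -> (0 < n)%N ->
  \sum_(i < N) B i *m (B i) ^t* = 1%:M ->
  \sum_(i < N) Bt i *m (Bt i) ^t* = 1%:M ->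
  (exists l : nat, [/\ spans_parity p B l false, spans_parity p B l true,
                      spans_parity p Bt l false & spans_parity p Bt l true]) ->
  trace_phase_eq p B Bt false \/ trace_phase_eq p B Bt true ->
  exists (c eta : R[i]) (v : 'M[R[i]]_n),
    gauge_rel p B Bt c eta v /\
    forall (c' eta' : R[i]) (v' : 'M[R[i]]_n), gauge_rel p B Bt c' eta' v' ->
      [/\ c' = c, eta' = eta & exists2 lam : R[i], `|lam| = 1 & v' = lam *: v].
Proof.
move=> N0 n0 nB nBt [l [sB0 sB1 sBt0 sBt1]] htr.
pose i0 : 'I_n := Ordinal n0.
have [b' hb'] : exists b', trace_phase_eq p B Bt b'.
  by case: htr => h; [exists false | exists true].
have [c [eta [v [c1 e2 vu hv]]]] := existence i0 nB nBt (SP_of sB0) (SP_of sB1)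
  (SP_of sBt0) (SP_of sBt1) hb'.
have etaE : eta = 1 \/ eta = -1.
  by move/eqP: e2; rewrite sqrf_eq1 => /orP [/eqP ->|/eqP ->]; [left | right].
exists c, eta, v; split; first by split.
move=> c' eta' v' [c1' he' vu' hv'].
have e2' : eta' ^+ 2 = 1 by case: he' => ->; rewrite ?expr1n ?sqrrN ?expr1n.
exact: (gauge_unique i0 (SP_of sB0) (letter_exists i0 (SP_of sB0) (SP_of sB1))
          c1 e2 vu hv c1' e2' vu' hv').
Qed.
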